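(* Let $\mathcal H_A,\mathcal H_B$ be finite-dimensional complex Hilbert spaces and let $\rho$ be a separable density matrix on $\mathcal H_A\otimes\mathcal H_B$ with full rank, $\mathcal R(\rho)=\dim(\mathcal H_A\otimes\mathcal H_B)$. If $\rho$ lies on the boundary of the set of PPT states, then $\mathcal R(\rho)>\mathcal R(\rho^{T_B})$.
   Context: $\rho^{T_B}=(\mathbf 1_A\otimes T)\rho$ is the partial transpose, with $T$ transposition in a chosen basis of $\mathcal H_B$. The set of PPT states is $\{\rho\ \text{density matrix}:\rho^{T_B}\ge 0\}$, a closed convex subset of the set of density matrices; its boundary is taken relative to the set of density matrices (so boundary points are arbitrarily close to density matrices whose partial transpose has a negative eigenvalue). $\mathcal R(\cdot)$ denotes the rank. $\rho$ is separable if it is a convex combination of pure product states $|\psi\rangle\langle\psi|\otimes|\phi\rangle\langle\phi|$. *)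

(* Defs.v *)
(* complex numbers are R[i] (mathcomp-real-closed's complex)
   over R : realType (the real numbers); tensor product of matrices is
   mxtens's tensmx (notation A *t B), with the index of (a,b) in
   'I_(dA*dB) given by mxtens_index (a,b) = a*dB + b. *)
From HB Require Import structures.
From mathcomp Require Import all_boot all_order all_algebra.
From mathcomp Require Export complex mxtens.
From mathcomp Require Export reals.
Set Implicit Arguments.
Unset Strict Implicit.
Unset Printing Implicit Defensive.
Import Order.TTheory GRing.Theory Num.Theory.
Local Open Scope ring_scope.

Section QInfo.
Variable C : numClosedFieldType.

Definition hconj m n (A : 'M[C]_(m, n)) : 'M[C]_(n, m) := (map_mx Num.conj A)^T.

Definition hermitian n (A : 'M[C]_n) : Prop := hconj A = A.

Definition psd n (A : 'M[C]_n) : Prop :=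
  hermitian A /\ forall v : 'cV[C]_n, 0 <= (hconj v *m A *m v) 0 0.

Definition density_matrix n (A : 'M[C]_n) : Prop := psd A /\ \tr A = 1.

Definition ptransB dA dB (rho : 'M[C]_(dA * dB)) : 'M[C]_(dA * dB) :=
  \matrix_(i, j)
    rho (mxtens_index ((mxtens_unindex i).1, (mxtens_unindex j).2))
        (mxtens_index ((mxtens_unindex j).1, (mxtens_unindex i).2)).

Definition proj n (v : 'cV[C]_n) : 'M[C]_n := v *m hconj v.

Definition unit_vector n (v : 'cV[C]_n) : Prop := hconj v *m v = 1%:M.

Definition separable dA dB (rho : 'M[C]_(dA * dB)) : Prop :=
  exists (N : nat) (p : 'I_N -> C) (psi : 'I_N -> 'cV[C]_dA)
         (phi : 'I_N -> 'cV[C]_dB),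
    [/\ forall k, 0 <= p k,
        \sum_(k < N) p k = 1,
        forall k, unit_vector (psi k),
        forall k, unit_vector (phi k) &
        rho = \sum_(k < N) p k *: (proj (psi k) *t proj (phi k))].

Definition ppt dA dB (rho : 'M[C]_(dA * dB)) : Prop :=
  density_matrix rho /\ psd (ptransB rho).

Definition ppt_boundary dA dB (rho : 'M[C]_(dA * dB)) : Prop :=
  ppt rho /\
  forall eps : C, 0 < eps ->
    exists sigma : 'M[C]_(dA * dB),
      [/\ density_matrix sigma, ~ psd (ptransB sigma) &
          forall i j, `|rho i j - sigma i j| < eps].

End QInfo.

(* Main.v *)
Require Import Defs.
From HB Require Import structures.
From mathcomp Require Import all_boot all_order all_algebra.
From mathcomp Require Import complex mxtens reals.
From mathcomp Require Import ring.
Import Order.TTheory GRing.Theory Num.Theory.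
Local Open Scope ring_scope.

Set Implicit Arguments.
Unset Strict Implicit.
Unset Printing Implicit Defensive.
Section Aux.
Variable C : numClosedFieldType.

Lemma hconjD m n (u v : 'M[C]_(m, n)) : hconj (u + v) = hconj u + hconj v.
Proof. by apply/matrixP => i j; rewrite !mxE rmorphD. Qed.

Lemma hconjZ m n a (u : 'M[C]_(m, n)) : hconj (a *: u) = a^* *: hconj u.
Proof. by apply/matrixP => i j; rewrite !mxE rmorphM. Qed.

Lemma hconjK m n (u : 'M[C]_(m, n)) : hconj (hconj u) = u.
Proof. by apply/matrixP => i j; rewrite !mxE conjCK. Qed.

Lemma hconjM m n p (A : 'M[C]_(m, n)) (B : 'M[C]_(n, p)) :
  hconj (A *m B) = hconj B *m hconj A.
Proof. by rewrite /hconj map_mxM trmx_mul. Qed.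

Lemma mxBE m n (A B : 'M[C]_(m, n)) i j : (A - B) i j = A i j - B i j.
Proof. by rewrite !mxE. Qed.

Definition Qf n (M : 'M[C]_n) (u v : 'cV[C]_n) := (hconj u *m M *m v) 0 0.


Lemma Qf_conj n (M : 'M[C]_n) u v : Defs.hermitian M -> Num.conj (Qf M u v) = Qf M v u.
Proof.
move=> HM; rewrite /Qf.
have -> : Num.conj ((hconj u *m M *m v) 0 0) = (hconj (hconj u *m M *m v)) 0 0 by rewrite !mxE.
by rewrite !hconjM hconjK HM mulmxA.
Qed.

Arguments Qf_conj {n M}.
Lemma Qf_lin n (M : 'M[C]_n) a b c d u v x y :
  Qf M (a *: u + b *: v) (c *: x + d *: y) =
  a^* * c * Qf M u x + a^* * d * Qf M u y + b^* * c * Qf M v x + b^* * d * Qf M v y.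
Proof.
rewrite /Qf hconjD !hconjZ !mulmxDl !mulmxDr -!scalemxAl -!scalemxAr !mxE.
ring.
Qed.

Lemma cs_bound n (M : 'M[C]_n) (u v : 'cV_n) : psd M ->
  Qf M u v * Num.conj (Qf M u v) <= (Qf M u u + 1) * Qf M v v.
Proof.
move=> [HM Hp].
set x := Qf M u v; set a := Qf M u u + 1.
have a0 : 0 < a by rewrite /a ltr_pwDr // Hp.
have ac : a^* = a by rewrite conj_Creal // ger0_real // ltW.
have H := Hp (a *: v + (- x) *: u).
rewrite -/(Qf M _ _) Qf_lin ac -(Qf_conj u v HM) -/x rmorphN in H.
have xr : 0 <= x * x^* by apply: mul_conjC_ge0.
have E : a * a * Qf M v v + a * - x * x^* + - x^* * a * x + - x^* * - x * Qf M u u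
   = a * (a * Qf M v v - x * x^*) - x * x^*.
  by rewrite /a; ring.
rewrite E subr_ge0 in H.
have : 0 <= a * (a * Qf M v v - x * x^*) by apply: le_trans H.
by rewrite pmulr_rge0 // subr_ge0.
Qed.


Lemma Qf_inv n (M : 'M[C]_n) v i : Defs.hermitian M -> M \in unitmx ->
  Qf M (invmx M *m delta_mx i 0) v = v i 0.
Proof.
move=> HM Hu; rewrite /Qf.
have -> : hconj (invmx M *m delta_mx i 0) *m M =
          hconj (invmx M *m delta_mx i 0) *m hconj M by rewrite HM.
rewrite -hconjM mulmxA mulmxV // mul1mx.
have -> : hconj (delta_mx i 0 : 'cV[C]_n) = delta_mx 0 i.
  by apply/matrixP => p q; rewrite !mxE; case: eqP; case: eqP => //= _ _;
     rewrite ?rmorph1 ?rmorph0.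
by rewrite -rowE mxE.
Qed.

Definition Kc n (M : 'M[C]_n) :=
  \sum_i (Qf M (invmx M *m delta_mx i 0) (invmx M *m delta_mx i 0) + 1).
Definition Sv n (v : 'cV[C]_n) := \sum_i v i 0 * (v i 0)^*.

Lemma sum_bound n (M : 'M[C]_n) v : psd M -> M \in unitmx ->
  Sv v <= Kc M * Qf M v v.
Proof.
move=> HM Hu; rewrite /Sv /Kc mulr_suml; apply: ler_sum => i _.
by have := cs_bound (invmx M *m delta_mx i 0) v HM; rewrite Qf_inv //; case: HM.
Qed.

Lemma amgm (p q : C) : p \is Num.real -> q \is Num.real ->
  (p * q) *+ 2 <= p ^+ 2 + q ^+ 2.
Proof.
move=> pr qr.
have : 0 <= (p - q) ^+ 2 by rewrite -real_normK ?rpredB // exprn_ge0.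
  by rewrite sqrrB addrAC subr_ge0.
Qed.

Lemma pert n (E : 'M[C]_n) v eps : 0 <= eps -> (forall i j, `|E i j| <= eps) ->
  `|Qf E v v| <= eps * (n%:R * Sv v).
Proof.
move=> e0 HE; rewrite /Qf mxE.
have -> : \sum_k (hconj v *m E) 0 k * v k 0 =
          \sum_k \sum_j ((v j 0)^* * E j k * v k 0).
  by apply: eq_bigr => k _; rewrite mxE mulr_suml; apply: eq_bigr => j _; rewrite !mxE.
apply: le_trans (ler_norm_sum _ _ _) _.
apply: (@le_trans _ _ (\sum_k \sum_j eps * (`|v j 0| * `|v k 0|))).
  apply: ler_sum => k _; apply: le_trans (ler_norm_sum _ _ _) _; apply: ler_sum => j _.
  rewrite !normrM norm_conjC mulrAC [eps * _]mulrC.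
  by apply: ler_wpM2l; [rewrite mulr_ge0 | apply: HE].
under eq_bigr do rewrite -mulr_sumr.
rewrite -mulr_sumr; apply: ler_wpM2l => //.
rewrite -(ler_pMn2r (_ : (0 < 2)%N)) //.
rewrite -sumrMnl; under eq_bigr do rewrite -sumrMnl.
apply: (@le_trans _ _ (\sum_k \sum_j (`|v j 0| ^+ 2 + `|v k 0| ^+ 2))).
  by apply: ler_sum => k _; apply: ler_sum => j _; apply: amgm; apply: normr_real.
have HS : \sum_j `|v j 0| ^+ 2 = Sv v by apply: eq_bigr => j _; rewrite normCK.
under eq_bigr do rewrite big_split /=.
rewrite HS.
rewrite big_split /=.
rewrite big_const_ord iter_addr_0; under eq_bigr do rewrite big_const_ord iter_addr_0.
rewrite [X in _ + X]sumrMnl HS.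
by rewrite mulr_natl mulr2n.
Qed.

Lemma pd_stable n (M : 'M[C]_n) : psd M -> M \in unitmx ->
  exists2 eps : C, 0 < eps & forall N : 'M[C]_n, Defs.hermitian N ->
    (forall i j, `|N i j - M i j| < eps) -> psd N.
Proof.
move=> HM Hu.
have K0 : 0 <= Kc M.
  by apply: sumr_ge0 => i _; apply: addr_ge0 => //; case: HM => _ ->.
have pos : 0 < n%:R * Kc M + 1.
  by apply: lt_le_trans ltr01 _; rewrite lerDr mulr_ge0.
exists (n%:R * Kc M + 1)^-1; first by rewrite invr_gt0.
move=> N HN Hc; split => // v.
have e0 : 0 <= (n%:R * Kc M + 1)^-1 by rewrite invr_ge0 ltW.
set eps := (n%:R * Kc M + 1)^-1 in e0 Hc *.
have Hc' : forall i j, `|(N - M) i j| <= eps.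
  by move=> i j; rewrite !mxE ltW.
have Hp := pert v e0 Hc'.
have HS := sum_bound v HM Hu.
set a := Qf M v v in HS *.
have a0 : 0 <= a by case: HM => _ ->.
have Hd : Qf (N - M) v v = Qf N v v - a.
  by rewrite /a /Qf mulmxBr mulmxBl mxBE.
rewrite Hd in Hp.
have br : Qf N v v \is Num.real by rewrite CrealE (Qf_conj v v HN).
have dr : Qf N v v - a \is Num.real by rewrite rpredB // ger0_real.
set d := Qf N v v - a in Hp dr.
have Hle : eps * (n%:R * Kc M) <= 1.
  have E1 : eps * (n%:R * Kc M + 1) = 1 by rewrite mulVf // gt_eqF.
  rewrite -[X in _ <= X]E1.
  by apply: ler_wpM2l => //; rewrite lerDl.
have Hda : `|d| <= a.
  apply: le_trans Hp _.
  apply: (@le_trans _ _ (eps * (n%:R * (Kc M * a)))).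
    by apply: ler_wpM2l => //; apply: ler_wpM2l.
  rewrite mulrA mulrA -[X in _ <= X]mul1r; apply: ler_wpM2r => //.
have Hnd : 0 <= `|d| + d.
  have nr : - d \is Num.real by rewrite rpredN.
  by have := real_ler_norm nr; rewrite normrN => H; rewrite -subr_ge0 opprK in H.
have -> : (hconj v *m N *m v) 0 0 = (a - `|d|) + (`|d| + d).
  by rewrite /d -/(Qf N v v); ring.
by apply: addr_ge0; rewrite ?subr_ge0.
Qed.


Lemma ptransB_herm dA dB (s : 'M[C]_(dA * dB)) :
  Defs.hermitian s -> Defs.hermitian (ptransB s).
Proof.
move=> Hs; apply/matrixP => i j; rewrite !mxE.
by rewrite -{2}Hs !mxE.
Qed.

End Aux.

Theorem lemma2 (R : realType) (dA dB : nat) (rho : 'M[R[i]]_(dA * dB)) :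
  density_matrix rho ->
  separable rho ->
  \rank rho = (dA * dB)%N ->
  ppt_boundary rho ->
  (\rank (ptransB rho) < \rank rho)%N.
Proof.
move=> _ _ Hr [[_ HM] Hb].
rewrite Hr ltn_neqAle rank_leq_row andbT.
apply/negP => /eqP Heq.
have Hu : ptransB rho \in unitmx by rewrite -row_free_unit /row_free Heq.
have [eps e0 Hst] := pd_stable HM Hu.
have [sigma [[[Hh _] _] Hn Hc]] := Hb eps e0.
apply: Hn; apply: Hst; first exact: ptransB_herm.
by move=> i j; rewrite !mxE distrC.
Qed.
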